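(* Let $\Pi=(\mathsf A,\mathsf B)$ be a protocol with $\mathrm{val}(\Pi)<1$. Then $\mathrm{Best}_{\mathsf B}\big(\Pi|_{M^{\mathsf A}_\Pi}\big)=1$.
   Context: An $m$-round single-bit-message protocol $\Pi$ is identified with the complete binary tree of height $m$ (nodes: binary strings of length $\le m$, root $\lambda$), with a control scheme, edge probabilities $e_\Pi(u,ub)$, common output $\chi_\Pi:\text{leaves}\to\{0,1\}$, node-visit probabilities $v_\Pi(u)$, leaf distribution $L_\Pi$ and value $\mathrm{val}(\Pi)=\mathbb E_{L_\Pi}[\chi_\Pi]$. For a node $u$ with $v_\Pi(u)>0$, $\Pi_u$ is the protocol on the subtree rooted at $u$ (conditioned on prefix $u$); otherwise $\Pi_u=\perp$, and expectations over $L_\perp$ are $0$. For a measure $M:\text{leaves}\to[0,1]$, $\mathbb E_{L_{\Pi_u}}[M]$ denotes the expectation of $M$ restricted to leaves under $u$. The $\mathsf A$-dominated measure $M^{\mathsf A}_\Pi$: if $\Pi$ has $0$ rounds with single leaf $\ell$, $M^{\mathsf A}_\Pi(\ell)=\chi_\Pi(\ell)$; otherwise, for a leaf $\ell$ with first bit $b$, writing $\mu_c=\mathbb E_{L_{\Pi_c}}[M^{\mathsf A}_{\Pi_c}]$: $M^{\mathsf A}_\Pi(\ell)=0$ if $e_\Pi(\lambda,b)=0$; $=M^{\mathsf A}_{\Pi_b}(\ell)$ if $e_\Pi(\lambda,b)=1$, or if $e_\Pi(\lambda,b)\in(0,1)$ and ($\mathsf A$ controls the root or $\mu_b\le\mu_{1-b}$);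 $=\frac{\mu_{1-b}}{\mu_b}M^{\mathsf A}_{\Pi_b}(\ell)$ otherwise. Conditional protocol: for $M$ with $\mathbb E_{L_\Pi}[M]<1$, $\Pi|_M$ has the same control scheme and output function as $\Pi$, and edge distribution $e_{\Pi|_M}(u,ub)=0$ if $\mathbb E_{L_{\Pi_u}}[M]=1$, and $e_{\Pi|_M}(u,ub)=e_\Pi(u,ub)\cdot\frac{1-\mathbb E_{L_{\Pi_{ub}}}[M]}{1-\mathbb E_{L_{\Pi_u}}[M]}$ otherwise. A deterministic strategy $\mathsf B'$ for $\mathsf B$ in a protocol $\Pi'$ is valid if $v_{\Pi'}(u)=0\Rightarrow v_{(\mathsf A,\mathsf B')}(u)=0$; $\mathrm{Best}_{\mathsf B}(\Pi')=\max_{\text{valid }\mathsf B'}(1-\mathrm{val}(\mathsf A,\mathsf B'))$. *)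

(* Defs.v *)
From HB Require Import structures.
From mathcomp Require Import all_boot all_order all_algebra.
Set Implicit Arguments. Unset Strict Implicit. Unset Printing Implicit Defensive.
Import Order.TTheory GRing.Theory Num.Theory.
Local Open Scope ring_scope.

(* An m-round single-bit-message protocol on the complete binary tree of
   height m.  Nodes are bit strings (seq bool), root = [::], the children of
   u are rcons u false / rcons u true.
   - ctrlA u   : true iff A controls node u (B controls it otherwise);
   - edge u b  : e(u, ub);
   - out l     : chi(l) for leaves l (strings of length rounds). *)
Record protocol (R : realFieldType) := Protocol {
  rounds : nat;
  ctrlA : seq bool -> bool;
  edge : seq bool -> bool -> R;
  out : seq bool -> bool }.

Section Protocols.
Variable R : realFieldType.
Implicit Types (P : protocol R) (M : seq bool -> R).

Definition proto_wf P : Prop :=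
  forall u, (size u < rounds P)%N ->
    (forall b, 0 <= edge P u b) /\ edge P u false + edge P u true = 1.

Fixpoint leaves (n : nat) : seq (seq bool) :=
  if n is n'.+1 then [seq b :: w | b <- [:: false; true], w <- leaves n']
  else [:: [::]].

Fixpoint pathp P (u w : seq bool) : R :=
  if w is b :: w' then edge P u b * pathp P (rcons u b) w' else 1.

Definition visit P u := pathp P [::] u.

Definition Exp P M : R := \sum_(l <- leaves (rounds P)) visit P l * M l.

Definition pval P : R := Exp P (fun l => (nat_of_bool (out P l))%:R).

(* the protocol on the subtree rooted at u (leaves of P_u are the
   suffixes w with u ++ w a leaf of P); only meaningful if visit P u > 0 *)
Definition subp P (u : seq bool) : protocol R :=
  Protocol (rounds P - size u) (fun w => ctrlA P (u ++ w))
           (fun w c => edge P (u ++ w) c) (fun w => out P (u ++ w)).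

(* E_{L_{P_u}}[M] for M a measure on the leaves of P_u, with P_u = bot
   (expectation 0) when visit P u = 0 *)
Definition ExpAt P u (M : seq bool -> R) : R :=
  if 0 < visit P u then Exp (subp P u) M else 0.

Fixpoint domA (n : nat) P (l : seq bool) : R :=
  match n, l with
  | 0, _ => (nat_of_bool (out P l))%:R
  | n'.+1, b :: l' =>
      let mu c := ExpAt P [:: c] (domA n' (subp P [:: c])) in
      if edge P [::] b == 0 then 0
      else if (edge P [::] b == 1) || ctrlA P [::] || (mu b <= mu (~~ b))
           then domA n' (subp P [:: b]) l'
           else mu (~~ b) / mu b * domA n' (subp P [:: b]) l'
  | _.+1, [::] => 0
  end.

Definition MA P : seq bool -> R := domA (rounds P) P.

Definition cond P M : protocol R :=
  Protocol (rounds P) (ctrlA P)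
    (fun u b =>
       let Eu := ExpAt P u (fun w => M (u ++ w)) in
       if Eu == 1 then 0
       else edge P u b * (1 - ExpAt P (rcons u b) (fun w => M (rcons u b ++ w)))
              / (1 - Eu))
    (out P).

Definition play P (B' : seq bool -> bool) : protocol R :=
  Protocol (rounds P) (ctrlA P)
    (fun u b => if ctrlA P u then edge P u b else (nat_of_bool (b == B' u))%:R)
    (out P).

Definition validB P (B' : seq bool -> bool) : Prop :=
  forall u, (size u <= rounds P)%N -> visit P u = 0 -> visit (play P B') u = 0.

Definition BestB_is P (r : R) : Prop :=
  (exists B', validB P B' /\ 1 - pval (play P B') = r) /\
  (forall B', validB P B' -> 1 - pval (play P B') <= r).

End Protocols.

(* Main.v *)
Require Import Defs.
From mathcomp Require Import all_boot all_order all_algebra.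
From mathcomp Require Import zify ring lra.
Set Implicit Arguments. Unset Strict Implicit. Unset Printing Implicit Defensive.
Import Order.TTheory GRing.Theory Num.Theory.
Local Open Scope ring_scope.

Definition peq (R : realFieldType) (P Q : protocol R) :=
  [/\ rounds P = rounds Q, forall u, ctrlA P u = ctrlA Q u,
      forall u b, edge P u b = edge Q u b & forall u, out P u = out Q u].

Lemma pathp_ext (R : realFieldType) (P Q : protocol R) :
  (forall u b, edge P u b = edge Q u b) -> forall w u, pathp P u w = pathp Q u w.
Proof. move=> he; elim=> [|b w IH] u //=; by rewrite he IH. Qed.

Lemma Exp_ext (R : realFieldType) (P Q : protocol R) M :
  rounds P = rounds Q -> (forall u b, edge P u b = edge Q u b) -> Exp P M = Exp Q M.
Proof.
move=> hr he; rewrite /Exp /visit hr; apply: eq_bigr => l _.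
by rewrite (pathp_ext he).
Qed.

Lemma Exp_peq (R : realFieldType) (P Q : protocol R) M : peq P Q -> Exp P M = Exp Q M.
Proof. by case=> hr _ he _; apply: Exp_ext. Qed.

Lemma Exp_eqM (R : realFieldType) (P : protocol R) (M M' : seq bool -> R) :
  M =1 M' -> Exp P M = Exp P M'.
Proof. move=> h; rewrite /Exp; apply: eq_bigr => l _; by rewrite h. Qed.

Lemma peq_subp (R : realFieldType) (P Q : protocol R) u : peq P Q -> peq (subp P u) (subp Q u).
Proof. case=> hr hc he ho; split => //=; by rewrite hr. Qed.

Lemma subp_subp (R : realFieldType) (P : protocol R) u v :
  peq (subp (subp P u) v) (subp P (u ++ v)).
Proof.
split => /=; first by rewrite size_cat subnDA.
- by move=> w; rewrite catA.
- by move=> w b; rewrite catA.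
- by move=> w; rewrite catA.
Qed.

Lemma subp_nil (R : realFieldType) (P : protocol R) : peq (subp P [::]) P.
Proof. split => //=; by rewrite subn0. Qed.

Lemma pathp_subp (R : realFieldType) (P : protocol R) u v w :
  pathp (subp P u) v w = pathp P (u ++ v) w.
Proof. elim: w v => [|b w IH] v //=; by rewrite IH rcons_cat. Qed.

Lemma pathp_rcons (R : realFieldType) (P : protocol R) u w b :
  pathp P u (rcons w b) = pathp P u w * edge P (u ++ w) b.
Proof.
elim: w u => [|c w IH] u /=; first by rewrite cats0 mulr1 mul1r.
by rewrite IH mulrA cat_rcons.
Qed.

Lemma visit_rcons (R : realFieldType) (P : protocol R) u b :
  visit P (rcons u b) = visit P u * edge P u b.
Proof. by rewrite /visit pathp_rcons. Qed.

Lemma leavesS n : leaves n.+1 =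
  [seq false :: w | w <- leaves n] ++ [seq true :: w | w <- leaves n].
Proof. by rewrite /= cats0. Qed.

Lemma size_leaves n l : l \in leaves n -> size l = n.
Proof.
elim: n l => [|n IH] l; first by rewrite inE => /eqP->.
by rewrite leavesS mem_cat => /orP[] /mapP[w /IH <- ->].
Qed.

Lemma Exp0 (R : realFieldType) (P : protocol R) M : rounds P = 0%N -> Exp P M = M [::].
Proof. move=> h; by rewrite /Exp h /= big_seq1 /visit /= mul1r. Qed.

Lemma Exp_dec (R : realFieldType) (P : protocol R) M n : rounds P = n.+1 ->
  Exp P M = edge P [::] false * Exp (subp P [:: false]) (fun w => M (false :: w))
          + edge P [::] true * Exp (subp P [:: true]) (fun w => M (true :: w)).
Proof.
move=> h; rewrite /Exp /= h subSS subn0 leavesS big_cat !big_map !big_distrr /=.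
congr (_ + _); apply: eq_bigr => w _; by rewrite /visit pathp_subp /= mulrA.
Qed.

Lemma peq_sym (R : realFieldType) (P Q : protocol R) : peq P Q -> peq Q P.
Proof. by case=> hr hc he ho; split. Qed.

Definition nonneg (R : realFieldType) (P : protocol R) :=
  forall u b, (size u < rounds P)%N -> 0 <= edge P u b.

Lemma nonneg_subp (R : realFieldType) (P : protocol R) u : nonneg P -> nonneg (subp P u).
Proof. move=> h w b /= hw; apply: h; rewrite size_cat; lia. Qed.

Lemma wf_subp (R : realFieldType) (P : protocol R) u : proto_wf P -> proto_wf (subp P u).
Proof. move=> h w /= hw; apply: h; rewrite size_cat; lia. Qed.

Lemma wf_nonneg (R : realFieldType) (P : protocol R) : proto_wf P -> nonneg P.
Proof. by move=> h u b /h [] ->. Qed.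

Lemma Exp_le (R : realFieldType) (P : protocol R) (M M' : seq bool -> R) :
  nonneg P -> (forall l, M l <= M' l) -> Exp P M <= Exp P M'.
Proof.
have [n hr] : exists n, rounds P = n by eexists.
elim: n P M M' hr => [|n IH] P M M' hr hP hM; first by rewrite !Exp0.
have h0 : (size (@nil bool) < rounds P)%N by rewrite hr.
rewrite !(Exp_dec _ hr); apply: lerD; apply: ler_wpM2l; try exact: hP;
  apply: IH => //=; try (by rewrite hr subSS subn0); exact: nonneg_subp.
Qed.

Lemma Exp_ge0 (R : realFieldType) (P : protocol R) (M : seq bool -> R) :
  nonneg P -> (forall l, 0 <= M l) -> 0 <= Exp P M.
Proof.
move=> hP hM; have -> : 0 = Exp P (fun _ => 0).
  by rewrite /Exp big1 // => l _; rewrite mulr0.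
exact: Exp_le.
Qed.

Lemma Exp_const (R : realFieldType) (P : protocol R) (c : R) :
  proto_wf P -> Exp P (fun _ => c) = c.
Proof.
have [n hr] : exists n, rounds P = n by eexists.
elim: n P hr => [|n IH] P hr hP; first by rewrite !Exp0.
have h0 : (size (@nil bool) < rounds P)%N by rewrite hr.
rewrite (Exp_dec _ hr) !IH /=; try (by rewrite hr subSS subn0); try exact: wf_subp.
by rewrite -mulrDl; have [_ ->] := hP _ h0; rewrite mul1r.
Qed.

Lemma Exp_scale (R : realFieldType) (P : protocol R) (c : R) M :
  Exp P (fun l => c * M l) = c * Exp P M.
Proof. rewrite /Exp big_distrr; apply: eq_bigr => l _; by rewrite mulrCA. Qed.

Lemma visit_ge0 (R : realFieldType) (P : protocol R) u :
  nonneg P -> (size u <= rounds P)%N -> 0 <= visit P u.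
Proof.
move=> hP hu; rewrite /visit.
have gen : forall w v, (size v + size w <= rounds P)%N -> 0 <= pathp P v w.
  elim => [|b w IH] v h /=; first exact: ler01.
  apply: mulr_ge0; first by apply: hP; move: h => /=; lia.
  apply: IH; rewrite size_rcons; move: h => /=; lia.
exact: gen.
Qed.

Lemma Exp_bnd (R : realFieldType) (P : protocol R) (M : seq bool -> R) :
  proto_wf P -> (forall l, 0 <= M l <= 1) -> 0 <= Exp P M <= 1.
Proof.
move=> hP hM; apply/andP; split.
  by apply: Exp_ge0 (wf_nonneg hP) _ => l; case/andP: (hM l).
rewrite -[X in _ <= X](Exp_const 1 hP); apply: Exp_le (wf_nonneg hP) _ => l.
by case/andP: (hM l).
Qed.

Lemma ExpAt_bnd (R : realFieldType) (P : protocol R) u (M : seq bool -> R) :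
  proto_wf P -> (forall l, 0 <= M l <= 1) -> 0 <= ExpAt P u M <= 1.
Proof.
move=> hP hM; rewrite /ExpAt; case: ifP => _; last by rewrite lexx ler01.
apply: Exp_bnd => //; exact: wf_subp.
Qed.

Definition muA (R : realFieldType) n (P : protocol R) c :=
  ExpAt P [:: c] (domA n (subp P [:: c])).

Definition fac (R : realFieldType) n (P : protocol R) b : R :=
  if (edge P [::] b == 1) || ctrlA P [::] || (muA n P b <= muA n P (~~ b)) then 1
  else muA n P (~~ b) / muA n P b.

Lemma domA_S (R : realFieldType) n (P : protocol R) b l : domA n.+1 P (b :: l) =
  if edge P [::] b == 0 then 0 else fac n P b * domA n (subp P [:: b]) l.
Proof. by rewrite /= /fac -/(muA n P b) -/(muA n P (~~ b)); case: ifP => //; case: ifP; rewrite ?mul1r. Qed.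

Lemma domA_ext (R : realFieldType) n (P Q : protocol R) l :
  peq P Q -> domA n P l = domA n Q l.
Proof.
elim: n P Q l => [|n IH] P Q l hpq; first by case: hpq => _ _ _ ho /=; rewrite ho.
case: l => [|b l] //.
have hmu : forall c, muA n P c = muA n Q c.
  move=> c; rewrite /muA /ExpAt /visit /=.
  case: (hpq) => hr hc he ho; rewrite he.
  case: ifP => // _; rewrite (Exp_peq _ (peq_subp [:: c] hpq)).
  by apply: Exp_eqM => w; apply: IH; apply: peq_subp.
rewrite !domA_S /fac !hmu; case: (hpq) => hr hc he ho; rewrite he hc.
by rewrite (IH _ _ l (peq_subp [:: b] hpq)).
Qed.

Lemma muA_ge0 (R : realFieldType) n (P : protocol R) c :
  proto_wf P -> (forall Q : protocol R, proto_wf Q -> forall l, 0 <= domA n Q l) ->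
  0 <= muA n P c.
Proof.
move=> hP h; rewrite /muA /ExpAt; case: ifP => // _.
apply: Exp_ge0; first exact/wf_nonneg/wf_subp.
by move=> l; apply: h; apply: wf_subp.
Qed.

Lemma fac_bnd (R : realFieldType) n (P : protocol R) b :
  proto_wf P -> (forall Q : protocol R, proto_wf Q -> forall l, 0 <= domA n Q l) ->
  0 <= fac n P b <= 1.
Proof.
move=> hP h; rewrite /fac; case: ifP => [_|]; first by rewrite ler01 lexx.
move=> /negbT; rewrite !negb_or => /andP[_ /negP hlt].
have h1 := muA_ge0 b hP h; have h2 := muA_ge0 (~~ b) hP h.
have hlt' : muA n P (~~ b) < muA n P b by rewrite ltNge; apply/negP.
have hp : 0 < muA n P b by apply: le_lt_trans hlt'.
apply/andP; split; first by apply: divr_ge0.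
by rewrite ler_pdivrMr // mul1r ltW.
Qed.

Lemma domA_bnd (R : realFieldType) n (P : protocol R) l :
  proto_wf P -> 0 <= domA n P l <= (nat_of_bool (out P l))%:R.
Proof.
elim: n P l => [|n IH] P l hP; first by rewrite /= lexx ler0n.
case: l => [|b l]; first by rewrite /= lexx ler0n.
have h0 : forall Q : protocol R, proto_wf Q -> forall l, 0 <= domA n Q l.
  by move=> Q hQ l'; case/andP: (IH Q l' hQ).
rewrite domA_S; case: ifP => _; first by rewrite lexx ler0n.
have /andP[f0 f1] := fac_bnd b hP h0.
have /andP[d0 d1] := IH (subp P [:: b]) l (wf_subp (u:=[:: b]) hP).
apply/andP; split; first exact: mulr_ge0.
apply: le_trans d1; rewrite -[X in _ <= X]mul1r; exact: ler_wpM2r.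
Qed.

Definition mu (R : realFieldType) (P : protocol R) u :=
  ExpAt P u (fun w => MA P (u ++ w)).

Definition exact_s (R : realFieldType) (P : protocol R) (s : R) u :=
  forall l, MA P (u ++ l) = s * domA (rounds P - size u) (subp P u) l.

Lemma edgeQ (R : realFieldType) (P : protocol R) u b :
  edge (cond P (MA P)) u b =
  if mu P u == 1 then 0 else edge P u b * (1 - mu P (rcons u b)) / (1 - mu P u).
Proof. by []. Qed.

Lemma MA_bnd (R : realFieldType) (P : protocol R) l :
  proto_wf P -> 0 <= MA P l <= 1.
Proof.
move=> hP; have /andP[h0 h1] := domA_bnd (rounds P) l hP.
rewrite /MA h0 /=; apply: le_trans h1 _; by case: (out P l); rewrite ?ler01 ?lexx.
Qed.

Lemma mu_bnd (R : realFieldType) (P : protocol R) u : proto_wf P -> 0 <= mu P u <= 1.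
Proof. move=> hP; apply: ExpAt_bnd => // l; exact: MA_bnd. Qed.

Lemma edge_pos (R : realFieldType) (P : protocol R) u b :
  proto_wf P -> (size u < rounds P)%N -> edge P u b != 0 -> 0 < edge P u b.
Proof. move=> hP hu hne; rewrite lt0r hne; by have [->] := hP u hu. Qed.

Lemma martingale (R : realFieldType) (P : protocol R) u (M : seq bool -> R) :
  proto_wf P -> (size u < rounds P)%N -> 0 < visit P u ->
  ExpAt P u (fun w => M (u ++ w)) =
  edge P u false * ExpAt P (rcons u false) (fun w => M (rcons u false ++ w)) +
  edge P u true * ExpAt P (rcons u true) (fun w => M (rcons u true ++ w)).
Proof.
move=> hP hu hv; rewrite {1}/ExpAt hv.
have hr : rounds (subp P u) = (rounds P - size u).-1.+1.
  by rewrite /= prednK // subn_gt0.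
rewrite (Exp_dec _ hr) /= cats0.
have ht : forall b, edge P u b * Exp (subp (subp P u) [:: b]) (fun w => M (u ++ b :: w)) =
  edge P u b * ExpAt P (rcons u b) (fun w => M (rcons u b ++ w)).
  move=> b; have [->|hne] := eqVneq (edge P u b) 0; first by rewrite !mul0r.
  congr (_ * _); rewrite /ExpAt visit_rcons.
  case: ifP => hp.
    rewrite (Exp_peq _ (subp_subp P u [:: b])) cats1.
    by apply: Exp_eqM => w; rewrite cat_rcons.
  by move: hp; rewrite pmulr_rgt0 // edge_pos.
by rewrite !ht.
Qed.

Lemma exact_root (R : realFieldType) (P : protocol R) : exact_s P 1 [::].
Proof.
move=> l; rewrite mul1r subn0 /MA /=.
by rewrite (domA_ext _ _ (subp_nil P)).
Qed.

Lemma exact_child (R : realFieldType) (P : protocol R) s u b :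
  (size u < rounds P)%N -> exact_s P s u -> edge P u b != 0 ->
  exact_s P (s * fac (rounds P - size u).-1 (subp P u) b) (rcons u b).
Proof.
move=> hu hex hne l.
have hk : (rounds P - size u = (rounds P - size u).-1.+1)%N by rewrite prednK // subn_gt0.
rewrite cat_rcons hex hk domA_S /= cats0 (negbTE hne) mulrA.
rewrite size_rcons subnS; congr (_ * _).
rewrite (domA_ext _ _ (subp_subp P u [:: b])) cats1.
done.
Qed.

Lemma mu_exact (R : realFieldType) (P : protocol R) s u :
  exact_s P s u -> 0 < visit P u ->
  mu P u = s * Exp (subp P u) (domA (rounds P - size u) (subp P u)).
Proof.
move=> hex hv; rewrite /mu /ExpAt hv -Exp_scale; exact: Exp_eqM.
Qed.

Lemma mu_child (R : realFieldType) (P : protocol R) s u b :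
  proto_wf P -> (size u < rounds P)%N -> exact_s P s u -> 0 < visit P u ->
  edge P u b != 0 ->
  mu P (rcons u b) = s * fac (rounds P - size u).-1 (subp P u) b *
                     muA (rounds P - size u).-1 (subp P u) b.
Proof.
move=> hP hu hex hv hne.
have hp := edge_pos hP hu hne.
rewrite (mu_exact (exact_child hu hex hne)); last by rewrite visit_rcons mulr_gt0.
congr (_ * _); rewrite size_rcons subnS /muA /ExpAt /visit pathp_subp /= cats0 mulr1 hp.
rewrite (Exp_peq _ (subp_subp P u [:: b])) cats1.
by apply: Exp_eqM => w; apply: domA_ext; rewrite -cats1; apply: peq_sym; exact: subp_subp.
Qed.

Definition Bstrat (R : realFieldType) (P : protocol R) u : bool :=
  if edge P u false == 0 then true else if edge P u true == 0 then false
  else muA (rounds P - size u).-1 (subp P u) true <= muA (rounds P - size u).-1 (subp P u) false.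

Lemma fac_subp (R : realFieldType) k (P : protocol R) u b :
  fac k (subp P u) b =
  if (edge P u b == 1) || ctrlA P u || (muA k (subp P u) b <= muA k (subp P u) (~~ b)) then 1
  else muA k (subp P u) (~~ b) / muA k (subp P u) b.
Proof. by rewrite /fac /= cats0. Qed.

Lemma B_step (R : realFieldType) (P : protocol R) s u :
  proto_wf P -> (size u < rounds P)%N -> exact_s P s u -> 0 < visit P u ->
  ctrlA P u = false ->
  [/\ edge P u (Bstrat P u) != 0,
      fac (rounds P - size u).-1 (subp P u) (Bstrat P u) = 1 &
      mu P (rcons u (Bstrat P u)) = mu P u].
Proof.
move=> hP hu hex hv hA.
have [hge hs] := hP u hu.
have hsum : forall b, edge P u b + edge P u (~~ b) = 1.
  by case => //=; rewrite addrC.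
have hmart : mu P u = edge P u false * mu P (rcons u false) + edge P u true * mu P (rcons u true).
  exact: martingale.
set k := (rounds P - size u).-1.
set m := muA k (subp P u).
have hm0 : forall b, 0 <= m b.
  move=> b; apply: muA_ge0; first exact: wf_subp.
  by move=> Q hQ l; case/andP: (domA_bnd k l hQ).
rewrite /Bstrat -/k -/m.
have [h0|h0] := eqVneq (edge P u false) 0.
  have h1 : edge P u true = 1 by move: hs; rewrite h0 add0r.
  rewrite fac_subp h1 eqxx /= oner_eq0; split => //.
  by rewrite hmart h0 h1 mul0r add0r mul1r.
have [h1|h1] := eqVneq (edge P u true) 0.
  have h0' : edge P u false = 1 by move: hs; rewrite h1 addr0.
  rewrite fac_subp h0' eqxx /= oner_eq0; split => //.
  by rewrite hmart h1 h0' mul0r addr0 mul1r.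
have hne : forall b, edge P u b != 0 by case.
have claim : forall b, m b <= m (~~ b) ->
   [/\ fac k (subp P u) b = 1, mu P (rcons u b) = s * m b & mu P (rcons u (~~ b)) = s * m b].
  move=> b hb.
  have hf : fac k (subp P u) b = 1 by rewrite fac_subp -/m hb !orbT.
  split => //; first by rewrite (mu_child hP hu hex hv (hne b)) -/k hf mulr1.
  rewrite (mu_child hP hu hex hv (hne (~~ b))) -/k fac_subp -/m hA negbK orbF.
  case: ifP => [/orP[/eqP he|hle]|].
  - have : edge P u b = 0 by move: (hsum b); rewrite he => ?; lra.
    by move/eqP; rewrite (negbTE (hne b)).
  - by rewrite mulr1; congr (_ * _); apply/eqP; rewrite eq_le hle hb.
  move=> /negbT; rewrite negb_or => /andP[_ hlt]; rewrite -ltNge in hlt.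
  have hp : 0 < m (~~ b) by apply: le_lt_trans hlt.
  by rewrite -mulrA mulfVK // gt_eqF.
have [hb|hb] := boolP (m true <= m false).
  have [hf hc hnc] := claim true hb.
  split => //; rewrite hmart hc; rewrite /= in hnc; rewrite hnc -mulrDl.
  by rewrite hs mul1r.
have hb' : m false <= m (~~ false) by rewrite /= ltW // ltNge.
have [hf hc hnc] := claim false hb'.
split => //; rewrite hmart hc; rewrite /= in hnc; rewrite hnc -mulrDl.
by rewrite hs mul1r.
Qed.

Definition Qr (R : realFieldType) (P : protocol R) u :=
  [/\ 0 < visit P u, mu P u != 1 & exists s, exact_s P s u].

Lemma Qreach (R : realFieldType) (P : protocol R) :
  proto_wf P -> Exp P (MA P) < 1 ->
  forall u, (size u <= rounds P)%N -> visit (cond P (MA P)) u != 0 -> Qr P u.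
Proof.
move=> hP hE; elim/last_ind => [|u c IH] hsz hvq.
  split; first by rewrite /visit /= ltr01.
  - by rewrite /mu /ExpAt /visit /= ltr01 (Exp_peq _ (subp_nil P)) lt_eqF.
  - by exists 1; exact: exact_root.
rewrite size_rcons in hsz.
move: hvq; rewrite visit_rcons mulf_eq0 negb_or => /andP[hvq hq].
have [hv hmu [s hex]] := IH (ltnW hsz) hvq.
move: hq; rewrite edgeQ (negbTE hmu) !mulf_eq0 !negb_or => /andP[/andP[he hmc] _].
split.
- by rewrite visit_rcons mulr_gt0 // edge_pos.
- by move: hmc; rewrite subr_eq0 eq_sym.
- by exists (s * fac (rounds P - size u).-1 (subp P u) c); exact: exact_child.
Qed.

Lemma Bvalid_edge (R : realFieldType) (P : protocol R) u :
  proto_wf P -> Qr P u -> (size u < rounds P)%N -> ctrlA P u = false ->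
  edge (cond P (MA P)) u (Bstrat P u) != 0.
Proof.
move=> hP [hv hmu [s hex]] hu hA.
have [he _ hmuc] := B_step hP hu hex hv hA.
rewrite edgeQ (negbTE hmu) hmuc mulfK //.
by rewrite subr_eq0 eq_sym.
Qed.

Lemma edge_play (R : realFieldType) (Q : protocol R) B u c :
  edge (play Q B) u c = if ctrlA Q u then edge Q u c else (nat_of_bool (c == B u))%:R.
Proof. by []. Qed.

Lemma ctrlA_cond (R : realFieldType) (P : protocol R) M u : ctrlA (cond P M) u = ctrlA P u.
Proof. by []. Qed.

Lemma B_valid (R : realFieldType) (P : protocol R) :
  proto_wf P -> Exp P (MA P) < 1 -> validB (cond P (MA P)) (Bstrat P).
Proof.
move=> hP hE; rewrite /validB /=.
elim/last_ind => [|u c IH] hsz hvq.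
  by move: hvq; rewrite /visit /= => /eqP; rewrite oner_eq0.
rewrite size_rcons in hsz.
move: hvq; rewrite !visit_rcons => /eqP; rewrite mulf_eq0 => /orP[/eqP h|/eqP h].
  by rewrite IH ?mul0r // ltnW.
have [h0|h0] := eqVneq (visit (cond P (MA P)) u) 0.
  by rewrite IH ?mul0r // ltnW.
rewrite edge_play ctrlA_cond; case hA: (ctrlA P u); first by rewrite h mulr0.
have [hc|hc] := eqVneq c (Bstrat P u).
  have hq := Qreach hP hE (ltnW hsz) h0.
  by move: (Bvalid_edge hP hq hsz hA); rewrite -hc h eqxx.
by rewrite mulr0.
Qed.

Lemma Preach (R : realFieldType) (P : protocol R) :
  proto_wf P -> Exp P (MA P) < 1 ->
  forall u, (size u <= rounds P)%N -> visit (play (cond P (MA P)) (Bstrat P)) u != 0 ->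
  visit (cond P (MA P)) u != 0 /\ exact_s P 1 u.
Proof.
move=> hP hE; elim/last_ind => [|u c IH] hsz hvp.
  split; first by rewrite /visit /= oner_eq0.
  exact: exact_root.
rewrite size_rcons in hsz.
move: hvp; rewrite visit_rcons mulf_eq0 negb_or => /andP[hvp he].
have [hvq hex] := IH (ltnW hsz) hvp.
have [hv hmu _] := Qreach hP hE (ltnW hsz) hvq.
move: he; rewrite edge_play ctrlA_cond; case hA: (ctrlA P u) => he.
  split; first by rewrite visit_rcons mulf_neq0.
  move: he; rewrite edgeQ (negbTE hmu) !mulf_eq0 !negb_or => /andP[/andP[he _] _].
  have := exact_child hsz hex he; by rewrite fac_subp hA orbT mulr1.
have hc : c = Bstrat P u by apply/eqP; move: he; case: (c == Bstrat P u); rewrite ?eqxx.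
have [he' hf _] := B_step hP hsz hex hv hA.
split; first by rewrite visit_rcons mulf_neq0 // hc Bvalid_edge //; split => //; exists 1.
have := exact_child hsz hex he'; by rewrite hf mulr1 -hc.
Qed.

Lemma leaf_out (R : realFieldType) (P : protocol R) l :
  proto_wf P -> Exp P (MA P) < 1 -> size l = rounds P ->
  visit (play (cond P (MA P)) (Bstrat P)) l != 0 -> out P l = false.
Proof.
move=> hP hE hl hvp.
have [hvq hex] := Preach hP hE (eq_leq hl) hvp.
have [hv hmu _] := Qreach hP hE (eq_leq hl) hvq.
move: hmu; rewrite (mu_exact hex hv) mul1r hl subnn Exp0 /=; last by rewrite hl subnn.
by rewrite cats0; case: (out P l); rewrite ?eqxx.
Qed.

Theorem lemma3p21 (R : realFieldType) (P : protocol R) :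
  proto_wf P -> pval P < 1 -> BestB_is (cond P (MA P)) 1.
Proof.
move=> hP hv.
have hE : Exp P (MA P) < 1.
  apply: le_lt_trans hv; apply: Exp_le; first exact: wf_nonneg.
  by move=> l; case/andP: (domA_bnd (rounds P) l hP).
split.
  exists (Bstrat P); split; first exact: B_valid.
  suff -> : pval (play (cond P (MA P)) (Bstrat P)) = 0 by rewrite subr0.
  rewrite /pval /Exp /=; apply: big1_seq => l /andP[_ hl].
  have hs := size_leaves hl.
  have [h0|h0] := eqVneq (visit (play (cond P (MA P)) (Bstrat P)) l) 0.
    by rewrite h0 mul0r.
  by rewrite (leaf_out hP hE hs h0) mulr0.
move=> B' _; rewrite lerBlDr lerDl.
apply: Exp_ge0 => [u b hu|l]; last by rewrite ler0n.
rewrite edge_play ctrlA_cond.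
case: (ctrlA P u); last by rewrite ler0n.
rewrite edgeQ; case: ifP => // hmu.
have /andP[m0 m1] := mu_bnd u hP.
have /andP[m0' m1'] := mu_bnd (rcons u b) hP.
have [hge _] := hP u hu.
by apply: divr_ge0; [apply: mulr_ge0 | ]; rewrite ?subr_ge0.
Qed.
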